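(* Let $\theta>1$, $t>0$, let $G:\mathbb R\to\mathbb R$ be bounded, and let $\{\mu_N\}$ be any sequence of probability measures on $\Omega_N$. Then $$\limsup_{N\to\infty}\mathbb E_{\mu_N}\Big[\Big|\int_0^tN^{1-\theta}\sum_{x\in\Lambda_N}G(\tfrac xN)r_N^-(\tfrac xN)(\eta_x(sN^2)-\alpha)\,ds\Big|\Big]=0,$$ $$\limsup_{N\to\infty}\mathbb E_{\mu_N}\Big[\Big|\int_0^tN^{1-\theta}\sum_{x\in\Lambda_N}G(\tfrac xN)r_N^+(\tfrac xN)(\eta_x(sN^2)-\beta)\,ds\Big|\Big]=0.$$
   Context: Fix $\gamma>2$, $p(0)=0$, $p(z)=c_\gamma|z|^{-\gamma-1}$ ($z\ne0$) with $c_\gamma$ normalizing; $\alpha,\beta\in(0,1)$, $\kappa>0$. $\Lambda_N=\{1,\dots,N-1\}$, $\Omega_N=\{0,1\}^{\Lambda_N}$; $\sigma^{x,y}\eta$ exchanges $\eta_x,\eta_y$; $\sigma^x\eta$ flips $\eta_x$; $c_x(\eta;a)=\eta_x(1-a)+(1-\eta_x)a$. $L_N=L_N^0+L_N^\ell+L_N^r$, $(L_N^0f)(\eta)=\frac12\sum_{x,y\in\Lambda_N}p(x-y)[f(\sigma^{x,y}\eta)-f(\eta)]$, $(L_N^\ell f)(\eta)=\frac{\kappa}{N^\theta}\sum_{x\in\Lambda_N,y\le0}p(x-y)c_x(\eta;\alpha)[f(\sigma^x\eta)-f(\eta)]$, $(L_N^rf)(\eta)=\frac{\kappa}{N^\theta}\sum_{x\in\Lambda_N,y\ge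 N}p(x-y)c_x(\eta;\beta)[f(\sigma^x\eta)-f(\eta)]$. $(\eta(t))_{t\ge0}$ is the Markov process on $\Omega_N$ with generator $L_N$ and initial law $\mu_N$; $\mathbb E_{\mu_N}$ is the corresponding expectation. $r_N^-(\frac xN)=\sum_{y\ge x}p(y)$, $r_N^+(\frac xN)=\sum_{y\le x-N}p(y)$. *)

(* Defs.v *)
From HB Require Import structures.
From mathcomp Require Import all_boot all_order all_algebra.
From mathcomp Require Import all_classical all_reals all_analysis.
Set Implicit Arguments. Unset Strict Implicit. Unset Printing Implicit Defensive.
Import Order.TTheory GRing.Theory Num.Theory.
Import numFieldNormedType.Exports.
Local Open Scope classical_set_scope.
Local Open Scope ring_scope.

Section Model.
Variable R : realType.

Definition rseries (u : nat -> R) : R := limn (fun n => \sum_(k < n) u k).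

(* c_gamma : normalizing constant, so that sum_{z <> 0} p(z) = 1 *)
Definition cgamma (gamma : R) : R :=
  (rseries (fun k => 2 * ((k.+1)%:R `^ (- gamma - 1))))^-1.

Definition pker (gamma : R) (z : int) : R :=
  if z == 0 then 0 else cgamma gamma * ((`|z|%:R : R) `^ (- gamma - 1)).

(* Omega_N = {0,1}^{Lambda_N}, Lambda_N = {1,...,N-1}; site x = i+1 for i : 'I_(N.-1) *)
Definition config (N : nat) := {ffun 'I_(N.-1) -> bool}.
Definition site (N : nat) (i : 'I_(N.-1)) : int := (i.+1)%:Z.

Definition exch N (x y : 'I_(N.-1)) (eta : config N) : config N :=
  [ffun z => if z == x then eta y else if z == y then eta x else eta z].
Definition flip N (x : 'I_(N.-1)) (eta : config N) : config N :=
  [ffun z => if z == x then ~~ eta x else eta z].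

Definition cx N (eta : config N) (x : 'I_(N.-1)) (a : R) : R :=
  (eta x)%:R * (1 - a) + (1 - (eta x)%:R) * a.

(* generator L_N = L_N^0 + L_N^l + L_N^r acting on functions f : Omega_N -> R *)
Definition gen (gamma alpha beta kappa theta : R) (N : nat)
  (f : config N -> R) (eta : config N) : R :=
  2^-1 * (\sum_(x : 'I_(N.-1)) \sum_(y : 'I_(N.-1))
            pker gamma (site x - site y) * (f (exch x y eta) - f eta))
  + kappa / (N%:R `^ theta) * \sum_(x : 'I_(N.-1))
      rseries (fun k => (* y = -k <= 0 *)
        pker gamma (site x - (- (k%:Z))) * cx eta x alpha * (f (flip x eta) - f eta))
  + kappa / (N%:R `^ theta) * \sum_(x : 'I_(N.-1))
      rseries (fun k => (* y = N + k >= N *)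
        pker gamma (site x - (N%:Z + k%:Z)) * cx eta x beta * (f (flip x eta) - f eta)).

Definition semigroup gamma alpha beta kappa theta N (t : R)
  (f : config N -> R) (a : config N) : R :=
  rseries (fun k => t ^+ k / (k`!)%:R *
                    iter k (gen gamma alpha beta kappa theta (N:=N)) f a).

Definition trans gamma alpha beta kappa theta N (t : R) (a b : config N) : R :=
  semigroup gamma alpha beta kappa theta t (fun c => (c == b)%:R) a.

(* finite-dimensional distributions of the chain started from law mu, for a
   list of (time, state) pairs with nondecreasing nonnegative times *)
Fixpoint chain_prob gamma alpha beta kappa theta N (a : config N) (t : R)
  (s : seq (R * config N)) : R :=
  match s with
  | [::] => 1
  | (t', a') :: s' => trans gamma alpha beta kappa theta (t' - t) a a' *
                      chain_prob gamma alpha beta kappa theta a' t' s'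
  end.

Definition fdd_prob gamma alpha beta kappa theta N (mu : config N -> R)
  (s : seq (R * config N)) : R :=
  match s with
  | [::] => 1
  | (t0, a0) :: s' =>
      (\sum_(b : config N) mu b * trans gamma alpha beta kappa theta t0 b a0) *
      chain_prob gamma alpha beta kappa theta a0 t0 s'
  end.

Definition is_prob_on N (mu : config N -> R) : Prop :=
  (forall a, 0 <= mu a) /\ \sum_(a : config N) mu a = 1.

(* eta : T -> R -> Omega_N is (a cadlag version of) the Markov process with
   generator L_N and initial law mu under P *)
Definition is_markov_process gamma alpha beta kappa theta N
  (mu : config N -> R) (d : measure_display) (T : measurableType d)
  (P : probability T R) (eta : T -> R -> config N) : Prop :=
  (forall t a, 0 <= t -> measurable [set w | eta w t = a])
  /\ (forall w t, 0 <= t -> exists2 delta : R, 0 < delta &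
        forall s, t <= s < t + delta -> eta w s = eta w t)
  /\ (forall s : seq (R * config N),
        all (fun p => 0 <= p.1) s -> sorted (fun p q => p.1 <= q.1) s ->
        P [set w | all (fun p => eta w p.1 == p.2) s] =
        (fdd_prob gamma alpha beta kappa theta mu s)%:E).

(* r_N^-(x/N) = sum_{y >= x} p(y),  r_N^+(x/N) = sum_{y <= x - N} p(y) *)
Definition rminus gamma (x : int) : R := rseries (fun k => pker gamma (x + k%:Z)).
Definition rplus gamma (N : nat) (x : int) : R :=
  rseries (fun k => pker gamma (x - N%:Z - k%:Z)).

End Model.

(* Main.v *)
Require Import Defs.
From HB Require Import structures.
From mathcomp Require Import all_boot all_order all_algebra.
From mathcomp Require Import all_classical all_reals all_analysis.
From mathcomp Require Import ring lra zify.
Import Order.TTheory GRing.Theory Num.Theory.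
Import numFieldNormedType.Exports.
Local Open Scope classical_set_scope.
Local Open Scope ring_scope.

Section RealLemmas.
Context (R : realType).

Definition wf (y : nat) : R := ((y%:R : R) * (y.+1)%:R)^-1.

Lemma wf_ge0 y : 0 <= wf y.
Proof. by rewrite /wf invr_ge0 mulr_ge0. Qed.

Lemma cube_le {y : nat} : (0 < y)%N -> (y%:R : R) ^- 3 <= 3 * (wf y - wf y.+1).
Proof.
move=> y0; rewrite /wf.
have yp : (0 : R) < y%:R by rewrite ltr0n.
set z : R := y%:R.
have -> : (y.+1%:R : R) = z + 1 by rewrite /z -addn1 natrD.
have -> : (y.+2%:R : R) = z + 2 by rewrite /z -addn2 natrD.
have h1 : (1 : R) <= z by rewrite /z ler1n.
have -> : 3 * ((z * (z + 1))^-1 - ((z + 1) * (z + 2))^-1) = 6 / (z * (z+1) * (z+2)).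
  by field; rewrite ?mulf_neq0 //; lra.
have hp : 0 < z * (z + 1) * (z + 2) by rewrite !mulr_gt0 //; lra.
have hz3 : 0 < z ^+ 3 by rewrite exprn_gt0.
rewrite ler_pdivlMr // mulrC ler_pdivrMr //.
rewrite !exprS expr0 mulr1; nra.
Qed.

Lemma tele3 (x n : nat) : (0 < x)%N ->
  \sum_(k < n) (((x + k)%:R : R) ^- 3) <= 3 * (wf x - wf (x + n)).
Proof.
move=> x0; elim: n => [|n IH]; first by rewrite big_ord0 addn0 subrr mulr0.
rewrite big_ord_recr /=.
have h : (0 < x + n)%N by rewrite addn_gt0 x0.
move/le_trans: (lerD IH (cube_le h)); apply.
by rewrite -mulrDr addrA subrK addnS.
Qed.

Lemma tele3' (x n : nat) : (0 < x)%N ->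
  \sum_(k < n) (((x + k)%:R : R) ^- 3) <= 3 * wf x.
Proof.
move=> x0; move/le_trans: (tele3 x n x0); apply.
by rewrite ler_pM2l // lerBlDr lerDl wf_ge0.
Qed.

Lemma sum_wf n : \sum_(i < n) wf i.+1 <= 1.
Proof.
suff -> : \sum_(i < n) wf i.+1 = 1 - (n.+1%:R)^-1.
  by rewrite lerBlDr lerDl invr_ge0.
elim: n => [|n IH]; first by rewrite big_ord0 invr1 subrr.
rewrite big_ord_recr /= IH /wf.
have np : (0 : R) < n.+1%:R by rewrite ltr0n.
have -> : (n.+2%:R : R) = n.+1%:R + 1 by rewrite -natr1.
by field; rewrite ?mulf_neq0 //; lra.
Qed.

End RealLemmas.

Section R3.
Context (R : realType).

Lemma rseries_bound (u a : nat -> R) (c B : R) :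
  (forall k, u k = c * a k) -> (forall k, 0 <= a k) ->
  (forall n, \sum_(k < n) a k <= B) -> `|rseries u| <= `|c| * B.
Proof.
move=> ua a0 aB.
pose S n := \sum_(k < n) a k.
have nd : nondecreasing_seq S.
  by apply/nondecreasing_seqP => n; rewrite /S big_ord_recr /= lerDl.
have cS : cvgn S.
  apply: nondecreasing_is_cvgn => //; exists B => _ [n _ <-]; exact: aB.
have S0 : 0 <= limn S.
  apply: limr_ge => //; near=> n; rewrite /S; exact: sumr_ge0.
have SB : limn S <= B.
  by apply: limr_le => //; near=> n; exact: aB.
have -> : rseries u = c * limn S.
  rewrite /rseries; apply: cvg_lim => //.
  have -> : (fun n => \sum_(k < n) u k) = (fun n => c * S n).
    by apply/funext => n; rewrite /S mulr_sumr; apply: eq_bigr => k _.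
  exact: cvgMl_tmp.
rewrite normrM ler_wpM2l // ger0_norm //.
Unshelve. all: by end_near. Qed.
Lemma pker_eq (gamma : R) (n : nat) (z : int) : `|z|%N = n -> (0 < n)%N ->
  pker gamma z = cgamma gamma * (n%:R `^ (- gamma - 1)).
Proof.
move=> zn n0; rewrite /pker; case: eqP => [z0|_]; last by rewrite zn.
by move: zn n0; rewrite z0 /= => <-.
Qed.

Lemma powR_le3 (gamma : R) (n : nat) : 2 < gamma -> (0 < n)%N ->
  (n%:R : R) `^ (- gamma - 1) <= n%:R ^- 3.
Proof.
move=> g2 n0; rewrite -powR_invn //.
apply: ler_powR; first by rewrite ler1n.
have -> : (3%:R : R) = 2 + 1 by rewrite -natr1.
lra.
Qed.

Lemma rseries_pker (gamma : R) (m : nat) (f : nat -> int) : 2 < gamma -> (0 < m)%N ->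
  (forall k, `|f k|%N = (m + k)%N) ->
  `|rseries (fun k => pker gamma (f k))| <= `|cgamma gamma| * (3 * wf R m).
Proof.
move=> g2 m0 fk.
apply: (@rseries_bound _ (fun k => ((m + k)%:R : R) `^ (- gamma - 1))).
- move=> k; apply: pker_eq => //; by rewrite addn_gt0 m0.
- by move=> k; exact: powR_ge0.
- move=> n; apply: (le_trans _ (tele3' R m n m0)).
  apply: ler_sum => k _; apply: powR_le3 => //; by rewrite addn_gt0 m0.
Qed.
Lemma sum_rminus (gamma : R) N : 2 < gamma ->
  \sum_(i : 'I_(N.-1)) `|rminus gamma (site i)| <= `|cgamma gamma| * 3.
Proof.
move=> g2.
apply: (le_trans (y := \sum_(i : 'I_(N.-1)) `|cgamma gamma| * 3 * wf R i.+1)).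
  apply: ler_sum => i _; rewrite -mulrA; apply: rseries_pker => // k.
rewrite -mulr_sumr; apply: ler_piMr; first by rewrite mulr_ge0.
exact: sum_wf.
Qed.

Lemma sum_rplus (gamma : R) N : 2 < gamma ->
  \sum_(i : 'I_(N.-1)) `|rplus gamma N (site i)| <= `|cgamma gamma| * 3.
Proof.
move=> g2.
apply: (le_trans (y := \sum_(i : 'I_(N.-1)) `|cgamma gamma| * 3 * wf R (N - i.+1))).
  apply: ler_sum => i _; rewrite -mulrA; apply: rseries_pker => //.
    have := ltn_ord i; lia.
  move=> k; rewrite /site; have := ltn_ord i; lia.
rewrite -mulr_sumr; apply: ler_piMr; first by rewrite mulr_ge0.
rewrite (reindex_inj rev_ord_inj) /=.
apply: (le_trans _ (sum_wf R N.-1)); rewrite le_eqVlt; apply/orP; left; apply/eqP; apply: eq_bigr => i _.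
congr wf; have := ltn_ord i; lia.
Qed.
End R3.
Lemma powR_seq0 (R : realType) (e : R) : e < 0 ->
  (fun N : nat => (N%:R : R) `^ e) @ \oo --> 0.
Proof.
move=> e0; apply/cvgr0Pnorm_lt => eps eps0.
pose m := expR (ln eps / e).
have m0 : 0 < m by rewrite expR_gt0.
exists (Num.truncn m).+1 => // N /= hN.
have mN : m < N%:R.
  apply: lt_le_trans (truncnS_gt m) _; by rewrite ler_nat.
have N0 : (0 : R) < N%:R by apply: lt_trans mN.
rewrite /powR ifF; last by apply/negbTE; rewrite gt_eqF.
rewrite gtr0_norm ?expR_gt0 // -[X in _ < X](lnK eps0) ltr_expR.
have h : ln eps / e < ln N%:R.
  by rewrite -(expRK (ln eps / e)) ltr_ln // posrE.
have -> : ln eps = e * (ln eps / e) by field; rewrite lt_eqF.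
by rewrite ltr_nM2l.
Qed.
Section IntLemmas.
Context d (T : measurableType d) (R : realType) (mu : {measure set T -> \bar R}).
Local Open Scope ereal_scope.

Lemma le_int_nm D (f g : T -> \bar R) : (forall x, D x -> 0 <= f x) ->
  (forall x, D x -> f x <= g x) ->
  \int[mu]_(x in D) f x <= \int[mu]_(x in D) g x.
Proof.
move=> f0 fg.
have g0 : forall x, D x -> 0 <= g x by move=> x Dx; exact: le_trans (f0 x Dx) (fg x Dx).
rewrite (ge0_integralE mu f0) (ge0_integralE mu g0).
apply: ereal_sup_le => _ [h hf <-]; exists h => //= x.
apply: le_trans (hf x) _; rewrite /patch; case: ifP => // /set_mem Dx.
exact: fg.
Qed.

Lemma le_int_cst D (f : T -> \bar R) (c : R) : measurable D ->
  (forall x, D x -> 0 <= f x) -> (forall x, D x -> f x <= c%:E) ->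
  \int[mu]_(x in D) f x <= c%:E * mu D.
Proof.
move=> mD f0 fc; rewrite -integral_cst//; exact: le_int_nm.
Qed.
End IntLemmas.

Lemma abse_sub_le (R : realType) (p q : \bar R) (c : R) :
  (0 <= p)%E -> (p <= c%:E)%E -> (0 <= q)%E -> (q <= c%:E)%E -> (`|p - q| <= c%:E)%E.
Proof.
case: p => [p| |] //; case: q => [q| |] //.
rewrite !lee_fin => p0 pc q0 qc. 
rewrite ler_norml; apply/andP; split; lra.
Qed.

Lemma main_gen (R : realType) (theta t a K M : R) (G : R -> R)
  (d : measure_display) (T : nat -> measurableType d)
  (P : forall N, probability (T N) R) (eta : forall N, T N -> R -> config N)
  (r : forall N, 'I_(N.-1) -> R) :
  1 < theta -> 0 < t -> 0 <= a <= 1 -> (forall u, `|G u| <= M) ->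
  (forall N, \sum_(x : 'I_(N.-1)) `|r N x| <= K) ->
  (limn_esup (fun N => (\int[P N]_w (
     `| \int[lebesgue_measure]_(s in `[0%R, t])
          ((N%:R `^ (1 - theta)) * \sum_(x : 'I_(N.-1))
             G ((site x)%:~R / N%:R) * r N x *
             ((eta N w (s * N%:R ^+ 2) x)%:R - a))%:E |))%E) = 0%E).
Proof.
move=> th t0 /andP[a0 a1] HG HK.
have M0 : 0 <= M by apply: le_trans (HG 0).
have K0 : 0 <= K by apply: le_trans (HK 0%N); rewrite sumr_ge0.
pose A (N : nat) := (N%:R : R) `^ (1 - theta) * (M * K).
set F := fun N w s => (N%:R : R) `^ (1 - theta) * \sum_(x : 'I_(N.-1))
             G ((site x)%:~R / N%:R) * r N x *
             ((eta N w (s * N%:R ^+ 2) x)%:R - a).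
have A0 N : 0 <= A N by rewrite mulr_ge0 ?powR_ge0 ?mulr_ge0.
have step1 N w s : `|F N w s| <= A N.
  rewrite /F /A normrM ger0_norm ?powR_ge0 //; apply: ler_wpM2l; first exact: powR_ge0.
  apply: le_trans (ler_norm_sum _ _ _) _.
  apply: (le_trans (y := \sum_(x : 'I_(N.-1)) M * `|r N x|)); last first.
    by rewrite -mulr_sumr ler_wpM2l.
  apply: ler_sum => x _; rewrite !normrM mulrC mulrA.
  apply: ler_wpM2r => //; rewrite -[M]mul1r; apply: ler_pM => //.
  by case: (eta N w _ x); rewrite /= ?sub0r ?normrN ger0_norm //; lra.
have lebt : (lebesgue_measure (`[0%R, t] : set R) = t%:E)%E.
  by rewrite lebesgue_measure_itv /= lte_fin t0 oppr0 adde0.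
have step2 N w : (`| \int[lebesgue_measure]_(s in `[0%R, t]) (F N w s)%:E | <= (A N * t)%:E)%E.
  rewrite integralE.
  have hb (g : R -> \bar R) : (forall s, 0 <= g s)%E -> (forall s, g s <= (A N)%:E)%E ->
      (0 <= \int[lebesgue_measure]_(s in `[0%R, t]) g s <= (A N * t)%:E)%E.
    move=> g0 gA; apply/andP; split; first by apply: integral_ge0 => s _; exact: g0.
    rewrite EFinM -lebt; apply: le_int_cst => //; by move=> s _.
  have /andP[p0 pA] : (0 <= \int[lebesgue_measure]_(s in `[0%R, t]) ((fun s => (F N w s)%:E)^\+ s) <= (A N * t)%:E)%E.
    apply: hb => s; rewrite funeposE ?le_max ?lexx ?orbT //.
    rewrite ge_max; apply/andP; split; last by rewrite -[0%E]/(0%:E) lee_fin.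
    rewrite lee_fin; apply: le_trans (step1 N w s); exact: ler_norm.
  have /andP[q0 qA] : (0 <= \int[lebesgue_measure]_(s in `[0%R, t]) ((fun s => (F N w s)%:E)^\- s) <= (A N * t)%:E)%E.
    apply: hb => s; rewrite funenegE ?le_max ?lexx ?orbT //.
    rewrite ge_max; apply/andP; split; last by rewrite -[0%E]/(0%:E) lee_fin.
    rewrite -EFinN lee_fin; apply: le_trans (step1 N w s).
    by rewrite -normrN; exact: ler_norm.
  exact: abse_sub_le.
have step3 N : (0 <= \int[P N]_w (`| \int[lebesgue_measure]_(s in `[0%R, t]) (F N w s)%:E |)
     <= (A N * t)%:E)%E.
  apply/andP; split; first by apply: integral_ge0 => w _.
  rewrite -[X in (_ <= X)%E]mule1 -(probability_setT (P N)).
  apply: le_int_cst => // w _; exact: step2.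
have cvA : (fun N => (A N * t)%:E) @ \oo --> 0%E.
  apply: cvg_EFin; first by apply: nearW.
  have -> : (fine \o (fun N => (A N * t)%:E)) = (fun N => (N%:R : R) `^ (1 - theta) * (M * K * t)).
    by apply/funext => N; rewrite /= /A -!mulrA.
  have h0 := @powR_seq0 R (1 - theta) ltac:(lra).
  have := @cvgMr_tmp _ _ _ _ _ _ (M * K * t) h0.
  by rewrite mul0r; apply.
have cvu : (fun N => \int[P N]_w (`| \int[lebesgue_measure]_(s in `[0%R, t]) (F N w s)%:E |))%E @ \oo --> 0%E.
  apply: (@squeeze_cvge _ _ _ _ (cst 0%E) _ (fun N => (A N * t)%:E)).
  - by apply: nearW => N; exact: step3.
  - exact: cvg_cst.
  - exact: cvA.
exact: (cvg_limn_einf_sup cvu).2.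
Qed.

Theorem lemma5p6 (R : realType) (gamma alpha beta kappa theta t : R)
  (G : R -> R) (d : measure_display) (T : nat -> measurableType d)
  (P : forall N, probability (T N) R)
  (mu : forall N, config N -> R) (eta : forall N, T N -> R -> config N) :
  2 < gamma -> 0 < alpha < 1 -> 0 < beta < 1 -> 0 < kappa ->
  1 < theta -> 0 < t ->
  (exists M : R, forall u, `|G u| <= M) ->
  (forall N, is_prob_on (mu N)) ->
  (forall N, is_markov_process gamma alpha beta kappa theta (mu N) (P N) (eta N)) ->
  (limn_esup (fun N => (\int[P N]_w (
     `| \int[lebesgue_measure]_(s in `[0%R, t])
          ((N%:R `^ (1 - theta)) * \sum_(x : 'I_(N.-1))
             G ((site x)%:~R / N%:R) * rminus gamma (site x) *
             ((eta N w (s * N%:R ^+ 2) x)%:R - alpha))%:E |))%E) = 0%E)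
  /\
  (limn_esup (fun N => (\int[P N]_w (
     `| \int[lebesgue_measure]_(s in `[0%R, t])
          ((N%:R `^ (1 - theta)) * \sum_(x : 'I_(N.-1))
             G ((site x)%:~R / N%:R) * rplus gamma N (site x) *
             ((eta N w (s * N%:R ^+ 2) x)%:R - beta))%:E |))%E) = 0%E).
Proof.
move=> g2 /andP[a0 a1] /andP[b0 b1] _ th t0 [M HM] _ _; split.
- apply: (@main_gen R theta t alpha (`|cgamma gamma| * 3) M G d T P eta
    (fun N (x : 'I_(N.-1)) => rminus gamma (site x))) => //.
  + by rewrite (ltW a0) (ltW a1).
  + by move=> N; exact: sum_rminus.
- apply: (@main_gen R theta t beta (`|cgamma gamma| * 3) M G d T P eta
    (fun N (x : 'I_(N.-1)) => rplus gamma N (site x))) => //.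
  + by rewrite (ltW b0) (ltW b1).
  + by move=> N; exact: sum_rplus.
Qed.
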